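(* If $\Delta\geq 4$, then the symmetric directed star satisfies $\chi'_{D_2}(\overleftrightarrow{K_{1,\Delta}})=\left\lceil 2\sqrt{\Delta}\right\rceil$.
   Context: For a simple graph $G$, the symmetric digraph $\overleftrightarrow{G}$ is obtained by replacing each edge $uv$ of $G$ by the pair of opposite arcs $\overrightarrow{uv}$ and $\overrightarrow{vu}$. A monochromatic 2-path is a pair of arcs $\overrightarrow{uv},\overrightarrow{vw}$ with $w\neq u$ of the same colour. An arc-colouring is distinguishing if the only automorphism of $\overleftrightarrow{G}$ preserving the colour of every arc is the identity. $\chi'_{D_2}(\overleftrightarrow{G})$ is the least number of colours in a distinguishing arc-colouring of $\overleftrightarrow{G}$ with no monochromatic 2-paths (monochromatic 2-cycles are allowed). *)

(* Defs.v *)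
From mathcomp Require Import all_boot all_order all_algebra all_fingroup all_field.
Set Implicit Arguments. Unset Strict Implicit. Unset Printing Implicit Defensive.

(* A simple graph on a finite vertex type T is given by a symmetric,
   irreflexive relation e. The symmetric digraph <->G has arc set
   { (u,v) | e u v } (both orientations of each edge). *)
Definition simple_graph (T : finType) (e : rel T) :=
  symmetric e /\ irreflexive e.

Definition digraph_aut (T : finType) (e : rel T) (s : {perm T}) :=
  forall u v, e (s u) (s v) = e u v.

(* An arc colouring with (at most) k colours: a colour for each ordered
   pair; only the values on arcs (u,v) with e u v matter. *)
Definition arc_colouring (T : finType) (k : nat) := T -> T -> 'I_k.

Definition no_mono_2path (T : finType) (e : rel T) k (c : arc_colouring T k) :=
  forall u v w, e u v -> e v w -> w != u -> c u v != c v w.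

Definition distinguishing (T : finType) (e : rel T) k (c : arc_colouring T k) :=
  forall s : {perm T}, digraph_aut e s ->
    (forall u v, e u v -> c (s u) (s v) = c u v) -> s = 1%g.

Definition D2_colourable (T : finType) (e : rel T) (k : nat) :=
  exists c : arc_colouring T k, no_mono_2path e c /\ distinguishing e c.

Definition chiD2_is (T : finType) (e : rel T) (m : nat) :=
  D2_colourable e m /\ forall k, D2_colourable e k -> m <= k.

(* The star K_{1,D}: vertex set 'I_D.+1, centre ord0, leaves 1..D. *)
Definition star_rel (D : nat) : rel 'I_D.+1 :=
  fun u v => (u == ord0) != (v == ord0).
Arguments star_rel D : clear implicits.

(* Main.v *)
Require Import Defs.
From mathcomp Require Import all_boot all_order all_algebra all_fingroup all_field.
From mathcomp Require Import zify.
Import Order.TTheory GRing.Theory Num.Theory.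

Lemma amgm a b : (4 * (a * b) <= (a+b)^2)%N.
Proof.
case: (leqP a b) => h.
  have [d ->] : exists d, b = a + d by exists (b - a); lia.
  nia.
have [d ->] : exists d, a = b + d by exists (a - b); lia.
nia.
Qed.
Lemma arith D x a b k : (4 <= D -> D <= x + a*b -> a+b+x <= k -> 4*D <= k^2)%N.
Proof.
move=> h1 h2 h3.
have := amgm a b.
case: (leqP k 3) => hk.
  have : (a + b + x <= 3)%N by lia.
  nia.
nia.
Qed.
Lemma arith2 m D : (4 * D <= m ^ 2 -> 1 <= D -> D <= (m %/ 2) * (m - m %/2))%N.
Proof. move=> h1 h2. have := leq_trunc_div m 2. nia. Qed.

Lemma lower_count D k (c : arc_colouring 'I_D.+1 k) : (2 <= D)%N ->
  no_mono_2path (star_rel D) c -> distinguishing (star_rel D) c ->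
  exists x a b, (D <= x + a * b)%N /\ (a + b + x <= k)%N.
Proof.
move=> D2 hnm hd.
set L := [set i : 'I_D.+1 | i != ord0].
have cardL : #|L| = D.
  have -> : L = [set~ ord0] by apply/setP => i; rewrite !inE.
  by rewrite cardsC1 card_ord.
have NM : forall i j, i \in L -> j \in L -> i != j -> c i ord0 != c ord0 j.
  move=> i j; rewrite !inE => iL jL ne; apply: hnm; rewrite /star_rel ?eqxx ?(negbTE iL) ?(negbTE jL) //; by rewrite eq_sym.
have key : forall i l, i \in L -> l \in L -> c i ord0 = c ord0 l -> i = l.
  move=> i l iL lL E; apply/eqP; apply/negP => /negP ne.
  by have := NM _ _ iL lL ne; rewrite E eqxx.
have DI : forall i j, i \in L -> j \in L -> c i ord0 = c j ord0 ->
    c ord0 i = c ord0 j -> i = j.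
  move=> i j iL jL E1 E2.
  have iL' : i != ord0 by move: iL; rewrite inE.
  have jL' : j != ord0 by move: jL; rewrite inE.
  have fix0 : tperm i j ord0 = ord0 by rewrite tpermD // eq_sym.
  have F : forall w, (tperm i j w == ord0) = (w == ord0).
    move=> w; case: tpermP => [->|->|//]; by rewrite (negbTE iL') (negbTE jL').
  have := hd (tperm i j).
  have aut : digraph_aut (star_rel D) (tperm i j).
    by move=> u v; rewrite /star_rel !F.
  have col : forall u v, star_rel D u v -> c (tperm i j u) (tperm i j v) = c u v.
    move=> u v; rewrite /star_rel.
    case: (eqVneq u ord0) => [->|un]; case: (eqVneq v ord0) => [->|vn] //= _.
      by rewrite fix0; case: tpermP => [->|->|].
    by rewrite fix0; case: tpermP => [->|->|].
  move=> /(_ aut col) H.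
  have := tpermL i j; rewrite H perm1 => ->. by [].
set In := [set c i ord0 | i in L].
set Out := [set c ord0 j | j in L].
set P := [set i | c i ord0 \in Out].
have cL := cardsID P L.
have h1 : (#|L :&: P| <= #|In :&: Out|)%N.
  have inj : {in L :&: P &, injective (fun i => c i ord0)}.
    move=> i j; rewrite !in_setI => /andP[iL iO] /andP[jL jO] E.
    rewrite inE in iO; rewrite inE in jO.
    case/imsetP: iO => l lL El.
    have il := key _ _ iL lL El.
    rewrite E in El; have jl := key _ _ jL lL El.
    by rewrite il jl.
  rewrite -(card_in_imset inj); apply: subset_leq_card; apply/subsetP => y.
  case/imsetP => i; rewrite !in_setI => /andP[iL iO] ->.
  rewrite inE in iO.
  by rewrite iO andbT; apply: imset_f.
have h2 : (#|L :\: P| <= #|In :\: Out| * #|Out :\: In|)%N.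
  have inj : {in L :\: P &, injective (fun i => (c i ord0, c ord0 i))}.
    move=> i j; rewrite !in_setD => /andP[iO iL] /andP[jO jL] [E1 E2].
    exact: DI.
  rewrite -cardsX -(card_in_imset inj); apply: subset_leq_card; apply/subsetP => y.
  case/imsetP => i; rewrite !in_setD => /andP[iO iL] ->.
  rewrite inE in iO.
  rewrite in_setX !in_setD iO /= (imset_f _ iL) (imset_f _ iL) /=. rewrite andbT.
  apply/imsetP => -[l lL El].
  have li := key _ _ lL iL (esym El).
  by move: iO; rewrite -li -El (imset_f _ iL).
have h3 : (#|In :&: Out| + #|In :\: Out| + #|Out :\: In| <= k)%N.
  have := cardsUI In Out.
  have := cardsID Out In.
  have := cardsID In Out.
  have := max_card (In :|: Out).
  rewrite card_ord setIC. lia.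
exists #|In :&: Out|, #|In :\: Out|, #|Out :\: In|; split; last by lia.
by rewrite -cardL -cL; apply: leq_add.
Qed.

Lemma upper D n : (2 <= D)%N -> (D <= (n.+1 %/ 2) * (n.+1 - n.+1 %/ 2))%N ->
  (4 <= n.+1)%N -> D2_colourable (star_rel D) n.+1.
Proof.
move=> D2 Dab n4.
set a := n.+1 %/ 2.
set b := n.+1 - a.
have a0 : (0 < a)%N by rewrite /a; lia.
have ab : (a + b = n.+1)%N by rewrite /b /a; lia.
have hA : forall u : nat, (u %% a < n.+1)%N.
  move=> u; apply: leq_trans (ltn_pmod u a0) _; lia.
have hB : forall u : 'I_D.+1, (a + (u : nat).-1 %/ a < n.+1)%N.
  move=> u; have uD := ltn_ord u.
  have : ((u : nat).-1 %/ a < b)%N.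
    rewrite ltn_divLR // mulnC; apply: leq_trans Dab; lia.
  lia.
pose c : arc_colouring 'I_D.+1 n.+1 := fun u v =>
  if v == ord0 then inord ((u : nat).-1 %% a) else inord (a + (v : nat).-1 %/ a).
exists c; split.
  move=> u v w; rewrite /star_rel /c.
  case: (eqVneq v ord0) => [->|vn].
    move=> un wn _.
    have wn' : (w == ord0) = false by move: wn; case: (w == ord0).
    rewrite wn'; apply/negP => /eqP /(congr1 (@nat_of_ord _)).
    rewrite inordK ?hA // inordK ?hB //.
    move=> E; have := ltn_pmod (u : nat).-1 a0; by rewrite E ltnNge leq_addr.
  case: (eqVneq u ord0) => [->|_] //= _. by case: (w == ord0).
move=> s aut col.
have s0 : s ord0 = ord0.
  apply/eqP; apply/negP => /negP ne.
  have hs : forall v, v != ord0 -> s v = ord0.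
    move=> v vn; have := aut ord0 v.
    rewrite /star_rel eqxx (negbTE ne) (negbTE vn) /=.
    by case: (eqVneq (s v) ord0).
  have v1n : (inord 1 : 'I_D.+1) != ord0 by apply/eqP => /(congr1 (@nat_of_ord _)); rewrite inordK //; lia.
  have v2n : (inord 2 : 'I_D.+1) != ord0 by apply/eqP => /(congr1 (@nat_of_ord _)); rewrite inordK //; lia.
  have := hs _ v1n; rewrite -(hs _ v2n) => /perm_inj /(congr1 (@nat_of_ord _)).
  rewrite !inordK //; lia.
apply/permP => u; rewrite perm1.
case: (eqVneq u ord0) => [->//|un].
have sun : s u != ord0 by rewrite -s0 (inj_eq perm_inj).
have e1 : star_rel D u ord0 by rewrite /star_rel eqxx (negbTE un).
have e2 : star_rel D ord0 u by rewrite /star_rel eqxx (negbTE un).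
have h1 := col _ _ e1.
have h2 := col _ _ e2.
rewrite s0 /c eqxx in h1.
rewrite s0 /c (negbTE sun) (negbTE un) in h2.
move/(congr1 (@nat_of_ord _)): h1; rewrite inordK ?hA // inordK ?hA // => h1.
move/(congr1 (@nat_of_ord _)): h2; rewrite inordK ?hB // inordK ?hB // => h2.
have E : ((s u : nat).-1 = (u : nat).-1)%N.
  rewrite (divn_eq (s u : nat).-1 a) (divn_eq (u : nat).-1 a) h1.
  congr (_ * _ + _); lia.
apply: val_inj => /=.
move: sun un; rewrite -!val_eqE /=; lia.
Qed.
Local Open Scope ring_scope.
Lemma ceil_facts (D m : nat) : (1 <= D)%N ->
  (m%:Z = Num.ceil (2 * sqrtC (D%:R : algC)))%R ->
  (4 * D <= m ^ 2)%N /\ ((m.-1) ^ 2 < 4 * D)%N.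
Proof.
move=> D1 Hm.
set x := 2 * sqrtC (D%:R : algC) in Hm.
have x0 : 0 <= x by apply: mulr_ge0; rewrite ?sqrtC_ge0 ler0n.
have xx : x ^+ 2 = (4 * D)%:R by rewrite /x exprMn sqrtCK natrM -natrX.
have [lt le] := andP (real_ceil_itv (ger0_real x0)).
rewrite -Hm in lt le.
change ((m%:Z)%:~R) with (m%:R : algC) in le.
have m0 : (0 < m)%N.
  case: m {Hm lt} le => // le.
  have : x ^+ 2 <= 0 by rewrite expr2 mulr_ge0_le0 //.
  by rewrite xx lern0 => /eqP; lia.
split.
  rewrite -(ler_nat algC) natrX -xx.
  by rewrite expr2 [X in _ <= X]expr2 ler_pM.
have E : (m%:Z - 1 = (m.-1)%:Z)%R by lia.
rewrite E in lt.
change (((m.-1)%:Z)%:~R) with ((m.-1)%:R : algC) in lt.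
rewrite -(ltr_nat algC) natrX -xx ltrXn2r // ler0n.
Qed.

Theorem mainTheorem8 (D : nat) (hD : (4 <= D)%N) (m : nat) :
  (m%:Z = Num.ceil (2 * sqrtC (D%:R : algC)))%R ->
  chiD2_is (star_rel D) m.
Proof.
move=> Hm.
have D1 : (1 <= D)%N by lia.
have [h4 hlt] := @ceil_facts D m D1 Hm.
split.
  case: m Hm h4 hlt => [|n] _ h4 hlt; first lia.
  apply: upper; [lia | exact: arith2 | ].
  rewrite -(leq_sqr 4); lia.
move=> k [c [hnm hd]].
have D2 : (2 <= D)%N by lia.
have [x [a [b [h1 h2]]]] := @lower_count D k c D2 hnm hd.
have hk := @arith D x a b k hD h1 h2.
case: (leqP m k) => // hmk.
have : (k <= m.-1)%N by lia.
rewrite -leq_sqr; lia.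
Qed.
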